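(* Let $G$ be an irreducible complex algebraic group, $D$ a Zariski dense subgroup of $G$, and $A$ a finitely generated free abelian group. Assume $D$ acts on $A$ via a homomorphism $D\to\mathrm{GL}(A)$ such that this action extends to a rational representation of $G$ on $A\otimes\mathbb{C}$. Let $\mathfrak{X}\subset A\setminus\{0\}$ be the set of all elements $a$ not contained in any proper $G$-invariant subspace of $A\otimes\mathbb{C}$. Then the action of $D$ on $A$ possesses the subgroup displacement property with respect to $\mathfrak{X}$.
   Context: Let $r=\mathrm{rank}(A)$. An action of $D$ on $A$ has the subgroup displacement property with respect to $\mathfrak{X}\subset A\setminus\{0\}$ if for every subgroup $B\subset A$ with $\mathrm{rank}(B)<r$ and every finite subset $X\subset\mathfrak{X}$ there is $g\in D$ such that $g(B)\cap X=\emptyset$. *)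

(* Defs.v *)
From HB Require Import structures.
From mathcomp Require Import all_boot all_order all_algebra.
From mathcomp Require Import reals complex.
Set Implicit Arguments. Unset Strict Implicit. Unset Printing Implicit Defensive.
Import Order.TTheory GRing.Theory Num.Theory.
Local Open Scope ring_scope.

Inductive pexpr (C : Type) (n : nat) : Type :=
| PConst of C
| PVar of 'I_n & 'I_n
| PAdd of pexpr C n & pexpr C n
| PMul of pexpr C n & pexpr C n.

Fixpoint peval (C : comRingType) (n : nat) (p : pexpr C n) (M : 'M[C]_n) : C :=
  match p with
  | PConst c => c
  | PVar i j => M i j
  | PAdd p q => peval p M + peval q M
  | PMul p q => peval p M * peval q M
  end.

Section Defs.
Variable C : fieldType.

Definition zclosed n (S : 'M[C]_n -> Prop) : Prop :=
  exists P : pexpr C n -> Prop,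
    forall M, S M <-> (M \in unitmx /\ forall p, P p -> peval p M = 0).

Definition is_group n (G : 'M[C]_n -> Prop) : Prop :=
  [/\ G 1%:M,
      (forall x, G x -> x \in unitmx),
      (forall x y, G x -> G y -> G (x *m y)) &
      (forall x, G x -> G (invmx x))].

Definition linear_algebraic_group n (G : 'M[C]_n -> Prop) : Prop :=
  is_group G /\ zclosed G.

Definition zirreducible n (G : 'M[C]_n -> Prop) : Prop :=
  (exists x, G x) /\
  forall S1 S2 : 'M[C]_n -> Prop, zclosed S1 -> zclosed S2 ->
    (forall x, G x -> S1 x \/ S2 x) ->
    (forall x, G x -> S1 x) \/ (forall x, G x -> S2 x).

Definition zdense n (D G : 'M[C]_n -> Prop) : Prop :=
  (forall x, D x -> G x) /\
  forall S, zclosed S -> (forall x, D x -> S x) -> forall x, G x -> S x.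

(* rational representation of G on C^r: a group homomorphism G -> GL_r(C)
   whose matrix coefficients are regular functions on G, i.e. restrictions
   of elements of C[x_ij, 1/det]. *)
Definition rational_rep n r (G : 'M[C]_n -> Prop) (rho : 'M[C]_n -> 'M[C]_r)
  : Prop :=
  [/\ exists (k : nat) (p : 'I_r -> 'I_r -> pexpr C n),
        forall g, G g -> rho g = \matrix_(i, j) (peval (p i j) g / (\det g) ^+ k),
      (forall g, G g -> rho g \in unitmx) &
      (forall g h, G g -> G h -> rho (g *m h) = rho g *m rho h)].
End Defs.

(* A = Z^r as integer row vectors; a matrix M acts (on the left) by a |-> M a,
   realised on row vectors as a *m M^T. *)
Definition actv r (M : 'M[int]_r) (a : 'rV[int]_r) : 'rV[int]_r := a *m M^T.

Definition toC (C : fieldType) r (a : 'rV[int]_r) : 'rV[C]_r :=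
  map_mx (fun z : int => z%:~R) a.

(* The set frak X: nonzero a in A not contained in any proper G-invariant
   C-subspace of A (x) C = C^r (subspaces = row spaces of r x r matrices). *)
Definition frakX (C : fieldType) n r (G : 'M[C]_n -> Prop)
  (rho : 'M[C]_n -> 'M[C]_r) (a : 'rV[int]_r) : Prop :=
  a != 0 /\
  forall U : 'M[C]_r,
    (forall g, G g -> (U *m (rho g)^T <= U)%MS) ->
    (\rank U < r)%N -> ~ (toC C a <= U)%MS.

Definition is_subgroupA r (B : 'rV[int]_r -> Prop) : Prop :=
  [/\ B 0, (forall x y, B x -> B y -> B (x + y)) & (forall x, B x -> B (- x))].

Definition has_indep r (B : 'rV[int]_r -> Prop) (k : nat) : Prop :=
  exists v : 'I_k -> 'rV[int]_r,
    (forall i, B (v i)) /\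
    (forall c : 'I_k -> int, \sum_(i < k) c i *: v i = 0 -> forall i, c i = 0).

Definition rank_lt r (B : 'rV[int]_r -> Prop) (m : nat) : Prop :=
  forall k, has_indep B k -> (k < m)%N.

Definition subgroup_displacement (C : fieldType) n r (D : 'M[C]_n -> Prop)
  (phi : 'M[C]_n -> 'M[int]_r) (X : 'rV[int]_r -> Prop) : Prop :=
  forall B : 'rV[int]_r -> Prop, is_subgroupA B -> rank_lt B r ->
  forall F : seq 'rV[int]_r, (forall x, x \in F -> X x) ->
  exists g, D g /\ forall b, B b -> actv (phi g) b \notin F.

(* Main.v *)
Require Import Defs.
From HB Require Import structures.
From mathcomp Require Import all_boot all_order all_algebra.
From mathcomp Require Import reals complex.
From Stdlib Require Import Classical.
From mathcomp Require Import ring.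
Import Order.TTheory GRing.Theory Num.Theory.
Local Open Scope ring_scope.
Set Implicit Arguments. Unset Strict Implicit.


Section ZA.
Variables (C : fieldType) (n : nat).

Lemma zclosed_ext (S S' : 'M[C]_n -> Prop) :
  (forall M, S M <-> S' M) -> zclosed S -> zclosed S'.
Proof.
move=> E [P HP]; exists P => M; rewrite -E; exact: HP.
Qed.

Lemma zclosed_false : zclosed (fun _ : 'M[C]_n => False).
Proof.
exists (fun p => p = PConst n 1) => M; split => // [[_ /(_ _ erefl)]] /=.
by move/eqP; rewrite oner_eq0.
Qed.

Lemma zclosed_union (S1 S2 : 'M[C]_n -> Prop) :
  zclosed S1 -> zclosed S2 -> zclosed (fun M => S1 M \/ S2 M).
Proof.
move=> [P1 H1] [P2 H2].
exists (fun p => exists p1 p2, [/\ P1 p1, P2 p2 & p = PMul p1 p2]) => M; split.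
  case=> [/H1 [U Z]|/H2 [U Z]]; split => // p [p1 [p2 [Q1 Q2 ->]]] /=.
    by rewrite Z // mul0r.
  by rewrite (Z p2) // mulr0.
move=> [U Z].
case: (classic (forall p1, P1 p1 -> peval p1 M = 0)) => [A|].
  by left; apply/H1.
move/not_all_ex_not => [p1 Np].
have Q1 := not_imply_elim _ _ Np.
have Np1 := not_imply_elim2 _ _ Np.
right; apply/H2; split => // p2 Q2.
have := Z (PMul p1 p2) (ex_intro _ p1 (ex_intro _ p2 (And3 Q1 Q2 erefl))).
by move/eqP; rewrite /= mulf_eq0 => /orP [/eqP//|/eqP].
Qed.

End ZA.


Section ZB.
Variables (C : fieldType) (n : nat).

Definition psum (s : seq (pexpr C n)) := foldr (fun a b => PAdd a b) (PConst n 0) s.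
Lemma peval_psum s M : peval (psum s) M = \sum_(q <- s) peval q M.
Proof. by elim: s => [|a s IH]; rewrite ?big_nil ?big_cons //= IH. Qed.

Lemma Sx_closed r (G : 'M[C]_n -> Prop) rho m (U : 'M[C]_(m, r)) (y : 'rV[C]_r) :
 zclosed G -> rational_rep G rho -> zclosed (fun h => G h /\ (y *m (rho h)^T <= U)%MS).
Proof.
move=> [PG HG] [[k [p Hp]] _ _].
pose K := cokermx U.
pose E j := psum [seq psum [seq PMul (PConst n (y 0 l * K i j)) (p i l) | l <- index_enum 'I_r] | i <- index_enum 'I_r].
have EE : forall h, G h -> forall j, (y *m (rho h)^T *m K) 0 j = peval (E j) h / (\det h) ^+ k.
  move=> h Gh j; rewrite Hp // /E peval_psum big_map mulr_suml.
  rewrite !mxE; apply: eq_bigr => i _.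
  rewrite peval_psum big_map mulr_suml !mxE mulr_suml; apply: eq_bigr => l _.
  rewrite !mxE /=; set a := y 0 l; set b := peval _ _; set c := \sum_(_ < _) _.
  ring.
exists (fun q => PG q \/ exists j, q = E j) => M; split.
  move=> [GM sub]; have [UM ZM] := (HG M).1 GM; split => // q [/ZM //|[j ->]].
  have := EE M GM j; move: sub; rewrite submxE => /eqP -> ; rewrite mxE => /esym/eqP.
  have dM : \det M != 0 by rewrite -unitfE -unitmxE.
  by rewrite mulf_eq0 invr_eq0 expf_eq0 (negbTE dM) andbF orbF => /eqP.
move=> [UM ZM]; have GM : G M by apply/HG; split => // q Q; apply: ZM; left.
split => //; rewrite submxE; apply/eqP/rowP => j.
rewrite EE // ZM ?mul0r ?mxE //; right; by exists j.
Qed.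

End ZB.


Section S.
Variables (C : numFieldType) (r : nat) (B : 'rV[int]_r -> Prop).

Definition goodfam k (Mv : 'M[int]_(k, r)) :=
  (forall i, B (row i Mv)) /\ row_free (map_mx (fun z : int => z%:~R) Mv : 'M[C]_(k, r)).

Lemma goodfam_lt k Mv : rank_lt B r -> @goodfam k Mv -> (k < r)%N.
Proof.
move=> RL [HB HF]; apply: RL; exists (fun i => row i Mv); split => // c Hc.
have H0 : (\row_i c i) *m Mv = 0.
  by rewrite mulmx_sum_row; under eq_bigr => i _ do rewrite mxE.
have : map_mx (fun z : int => z%:~R) (\row_i c i) *m map_mx (fun z : int => z%:~R) Mv
    = 0 *m (map_mx (fun z : int => z%:~R) Mv : 'M[C]_(k, r)).
  by rewrite -map_mxM H0 mul0mx map_mx0.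
move/(row_free_inj HF)/rowP => E i; have := E i; rewrite !mxE => /eqP.
by rewrite intr_eq0 => /eqP.
Qed.

Lemma Bspan : rank_lt B r ->
  exists m (U : 'M[C]_(m, r)), (\rank U < r)%N /\ forall b, B b -> (toC C b <= U)%MS.
Proof.
move=> RL.
suff: forall d k (Mv : 'M[int]_(k, r)), (r - k <= d)%N -> goodfam Mv ->
  exists m (U : 'M[C]_(m, r)), (\rank U < r)%N /\ forall b, B b -> (toC C b <= U)%MS.
  move=> /(_ r 0 0); apply; first by rewrite subn0. split; first by move=> i; case: i.
  by rewrite /row_free -leqn0 rank_leq_row.
elim=> [|d IH] k Mv Hd G.
  by have := goodfam_lt RL G; rewrite -subn_gt0; move: Hd; rewrite leqn0 => /eqP ->.
case: (classic (forall b, B b -> (toC C b <= map_mx (fun z : int => z%:~R) Mv)%MS)) => [H|].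
  exists k, (map_mx (fun z : int => z%:~R) Mv); split => //.
  by case: (G) => _ /eqP ->; exact: goodfam_lt RL G.
move/not_all_ex_not => [b Nb].
have Bb := not_imply_elim _ _ Nb; have Nsub := not_imply_elim2 _ _ Nb.
apply: (IH _ (col_mx Mv b)).
  by rewrite subnDA leq_subLR add1n.
split.
  by move=> i; case: (split_ordP i) => j ->; rewrite ?rowKu ?rowKd; [apply: G.1 | have -> : row j b = b by apply/rowP => l; rewrite !mxE (ord1 j)].
rewrite map_col_mx /row_free -addsmxE; set A := map_mx _ Mv; set y := map_mx _ b.
have lt : (A < (A + y)%MS)%MS.
  rewrite ltmxE addsmxSl /=; apply/negP => H; apply: Nsub.
  exact: submx_trans (addsmxSr A y) H.
move: lt; rewrite ltmxErank => /andP [_]; case: (G) => _ /eqP ->.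
move=> lt; apply/eqP/anti_leq/andP; split; last by rewrite addn1.
by rewrite addsmxE rank_leq_row.
Qed.
End S.


Section W.
Variables (C : fieldType) (n r : nat) (G : 'M[C]_n -> Prop) (rho : 'M[C]_n -> 'M[C]_r).

Lemma rank_adds_lt m1 m2 (A : 'M[C]_(m1, r)) (z : 'M[C]_(m2, r)) :
  ~ (z <= A)%MS -> (\rank A < \rank (A + z)%MS)%N.
Proof.
move=> Nz; have : (A < A + z)%MS.
  rewrite ltmxE addsmxSl /=; apply/negP => H; apply: Nz.
  exact: submx_trans (addsmxSr A z) H.
by rewrite ltmxErank => /andP [].
Qed.

Lemma Wlemma m (U : 'M[C]_(m, r)) (y : 'rV[C]_r) :
  is_group G -> (forall g h, G g -> G h -> rho (g *m h) = rho g *m rho h) ->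
  rho 1%:M = 1%:M -> (\rank U < r)%N ->
  (forall h, G h -> (y *m (rho h)^T <= U)%MS) ->
  exists U' : 'M[C]_r,
    [/\ (forall g, G g -> (U' *m (rho g)^T <= U')%MS), (\rank U' < r)%N & (y <= U')%MS].
Proof.
move=> [G1 _ GM _] rhoM rho1 rU Hy.
pose Q (V : 'M[C]_r) := forall h, G h -> (V *m (rho h)^T <= U)%MS.
have QS : forall V1 V2 : 'M[C]_r, Q V1 -> Q V2 -> Q (V1 + V2)%MS.
  move=> V1 V2 Q1 Q2 h Gh; rewrite addsmxMr addsmx_sub Q1 ?Q2 //.
have Qy : Q <<y>>%MS by move=> h Gh; rewrite (eqmxMr _ (genmxE y)) Hy.
suff: forall d (V : 'M[C]_r), (r - \rank V <= d)%N -> Q V -> exists U' : 'M[C]_r,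
    [/\ (forall g, G g -> (U' *m (rho g)^T <= U')%MS), (\rank U' < r)%N & (y <= U')%MS].
  move=> /(_ r 0); apply; first by rewrite leq_subr.
  by move=> h Gh; rewrite mul0mx sub0mx.
elim=> [|d IH] V Hd QV.
  have : (\rank V < r)%N.
    apply: leq_ltn_trans rU; apply: mxrankS.
    by have := QV _ G1; rewrite rho1 trmx1 mulmx1.
  by rewrite -subn_gt0; move: Hd; rewrite leqn0 => /eqP ->.
have ext : forall Z : 'M[C]_r, Q Z -> ~ (Z <= V)%MS -> exists U' : 'M[C]_r,
    [/\ (forall g, G g -> (U' *m (rho g)^T <= U')%MS), (\rank U' < r)%N & (y <= U')%MS].
  move=> Z QZ NZ; apply: (IH (V + Z)%MS); last exact: QS.
  have := rank_adds_lt NZ; have := rank_leq_col (V + Z)%MS.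
  move: Hd; set a := \rank V; set b := \rank _ => Hd Hb Hab.
  rewrite leq_subLR; rewrite leq_subLR in Hd.
  by apply: leq_trans Hd _; rewrite addnS -addSn leq_add2r.
case: (classic (y <= V)%MS) => [yV|yV]; last first.
  by apply: (ext <<y>>%MS Qy); rewrite genmxE.
case: (classic (forall g, G g -> (V *m (rho g)^T <= V)%MS)) => [inv|].
  exists V; split => //.
  apply: leq_ltn_trans rU; apply: mxrankS.
  by have := QV _ G1; rewrite rho1 trmx1 mulmx1.
move/not_all_ex_not => [g Ng].
have Gg := not_imply_elim _ _ Ng; have NV := not_imply_elim2 _ _ Ng.
apply: (ext (V *m (rho g)^T)) => // h Gh.
by rewrite -mulmxA -trmx_mul -rhoM //; apply: QV; apply: GM.
Qed.
End W.
Section ZE.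
Variables (C : fieldType) (n : nat).
Lemma zclosed_bigU (T : eqType) (S : T -> 'M[C]_n -> Prop) (F : seq T) :
 (forall x, x \in F -> zclosed (S x)) -> zclosed (fun M => exists2 x, x \in F & S x M).
Proof.
elim: F => [|a F IH] H.
  by apply: (zclosed_ext _ (@zclosed_false C n)) => M; split => // [[x]].
apply: (zclosed_ext (S := fun M => S a M \/ exists2 x, x \in F & S x M)).
  move=> M; split.
    by case=> [Sa|[x xF Sx]]; [exists a; rewrite ?mem_head | exists x; rewrite // in_cons xF orbT].
  by move=> [x]; rewrite in_cons => /orP [/eqP ->|xF Sx]; [left|right; exists x].
apply: zclosed_union; first by apply: H; rewrite mem_head.
by apply: IH => x xF; apply: H; rewrite in_cons xF orbT.
Qed.

Lemma irr_list (G : 'M[C]_n -> Prop) (T : eqType) (S : T -> 'M[C]_n -> Prop) (F : seq T) :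
  zirreducible G -> (forall x, x \in F -> zclosed (S x)) ->
  (forall g, G g -> exists2 x, x \in F & S x g) -> exists2 x, x \in F & forall g, G g -> S x g.
Proof.
move=> [[g0 Gg0] Irr]; elim: F => [|a F IH] H cov.
  by have [x] := cov _ Gg0.
have HF : forall x, x \in F -> zclosed (S x) by move=> x xF; apply: H; rewrite in_cons xF orbT.
have cov2 : forall g, G g -> S a g \/ exists2 x, x \in F & S x g.
  move=> g Gg; have [x] := cov g Gg; rewrite in_cons => /orP [/eqP ->|xF Sx]; first by left.
  by right; exists x.
have [Ha|Hr] := Irr _ _ (H _ (mem_head _ _)) (zclosed_bigU HF) cov2.
  by exists a; rewrite ?mem_head.
have [x xF Hx] := IH HF Hr.
by exists x; rewrite // in_cons xF orbT.
Qed.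
End ZE.

Theorem proposition4p1 (R : realType) (n r : nat)
  (G D : 'M[R[i]]_n -> Prop) (phi : 'M[R[i]]_n -> 'M[int]_r)
  (rho : 'M[R[i]]_n -> 'M[R[i]]_r) :
  linear_algebraic_group G -> zirreducible G ->
  is_group D -> zdense D G ->
  (forall d, D d -> phi d \in unitmx) ->
  (forall d e, D d -> D e -> phi (d *m e) = phi d *m phi e) ->
  rational_rep G rho ->
  (forall d, D d -> rho d = map_mx (fun z : int => z%:~R) (phi d)) ->
  subgroup_displacement D phi (frakX G rho).
Proof.
move=> [Ggrp Gcl] Girr Dgrp [DG Ddense] phiU phiM Hrho Hrd B HB RL F HF.
have Gg := Ggrp; case: Gg => [G1 GU GM _].
have Dg := Dgrp; case: Dg => [D1 DU DM DV].
case: (Hrho) => _ rhoU rhoM.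
have rho1 : rho 1%:M = 1%:M.
  have := rhoM _ _ G1 G1; rewrite mulmx1 => E.
  by rewrite -[LHS](mulKmx (rhoU _ G1)) -E mulVmx // rhoU.
have phi1 : phi 1%:M = 1%:M.
  have := phiM _ _ D1 D1; rewrite mulmx1 => E.
  by rewrite -[LHS](mulKmx (phiU _ D1)) -E mulVmx // phiU.
apply: NNPP => Hn.
have fail : forall g, D g -> exists2 b, B b & actv (phi g) b \in F.
  move=> g Dg; apply: NNPP => Nb; apply: Hn; exists g; split => // b Bb.
  by apply/negP => Hin; apply: Nb; exists b.
have [m [U [rU HU]]] := Bspan (R[i]) RL.
pose S x h := G h /\ (toC (R[i]) x *m (rho h)^T <= U)%MS.
have Dcov : forall h, D h -> exists2 x, x \in F & S x h.
  move=> h Dh; have [b Bb xF] := fail _ (DV _ Dh).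
  exists (actv (phi (invmx h)) b) => //; split; first exact: DG.
  rewrite Hrd // /toC map_trmx -map_mxM /actv -mulmxA -trmx_mul -phiM //; last exact: DV.
  have E : h *m invmx h = 1%:M by apply: mulmxV; apply: DU.
  by rewrite E phi1 trmx1 mulmx1 HU.
have Scl : forall x, x \in F -> zclosed (S x).
  by move=> x _; apply: Sx_closed.
have Gcov : forall h, G h -> exists2 x, x \in F & S x h.
  by apply: (Ddense _ (zclosed_bigU Scl)).
have [x xF Hx] := irr_list Girr Scl Gcov.
have [U' [inv rU' xU']] := Wlemma Ggrp rhoM rho1 rU (fun h Gh => (Hx h Gh).2).
by have [_ /(_ U' inv rU')] := HF x xF.
Qed.
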